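(* Let $D$ be a strong symmetric digraph of order $n$ and $k$ an integer with $2\le k\le n$. Then $\lambda_k(D)\ge 2$ if and only if $D$ has no bridge.
   Context: A digraph $D$ is symmetric if for every arc $xy$, $yx$ is also an arc. A 2-cycle $xyx$ of a strong digraph $D$ is a bridge if $D-\{xy,yx\}$ is disconnected (i.e., its underlying graph is disconnected). For $S\subseteq V(D)$, $\lambda_S(D)$ is the maximum number of pairwise arc-disjoint strong subgraphs of $D$ containing $S$, and $\lambda_k(D)=\min\{\lambda_S(D): S\subseteq V(D), |S|=k\}$. *)

(* Defs.v *)
(* A digraph on a finite vertex type T is given by its arc
   relation D : rel T (no loops, no parallel arcs). *)
From mathcomp Require Import all_boot.
From mathcomp Require Import boolp.
Set Implicit Arguments. Unset Strict Implicit. Unset Printing Implicit Defensive.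

Section Digraphs.
Variable T : finType.

Definition loopless (D : rel T) : Prop := irreflexive D.

Definition symmetric_digraph (D : rel T) : Prop := forall x y, D x y -> D y x.

Definition strong (D : rel T) : Prop := forall x y, connect D x y.

Definition underlying_connected (D : rel T) : Prop :=
  forall x y, connect [rel u v | D u v || D v u] x y.

Definition del2 (D : rel T) (x y : T) : rel T :=
  [rel u v | D u v && ~~ (((u == x) && (v == y)) || ((u == y) && (v == x)))].

Definition is_bridge (D : rel T) (x y : T) : Prop :=
  x != y /\ D x y /\ D y x /\ ~ underlying_connected (del2 D x y).

Definition has_bridge (D : rel T) : Prop := exists x y, is_bridge D x y.

Definition subgraph (D : rel T) (H : {set T} * {set T * T}) : Prop :=
  forall a, a \in H.2 -> [/\ D a.1 a.2, a.1 \in H.1 & a.2 \in H.1].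

Definition strong_subgraph_containing (D : rel T) (S : {set T})
    (H : {set T} * {set T * T}) : Prop :=
  [/\ subgraph D H, S \subset H.1 &
      forall x y, x \in H.1 -> y \in H.1 ->
        connect [rel u v | (u, v) \in H.2] x y].

Definition packable (D : rel T) (S : {set T}) (m : nat) : Prop :=
  exists F : 'I_m -> {set T} * {set T * T},
    (forall i, strong_subgraph_containing D S (F i)) /\
    (forall i j, i != j -> [disjoint (F i).2 & (F j).2]).

(* lambda_S(D): the maximum m such that packable D S m.  For |S| >= 2 every
   strong subgraph containing S has an arc, so m <= #|T * T| and the maximum
   below is the true maximum. *)
Definition lambdaS (D : rel T) (S : {set T}) : nat :=
  \max_(m < #|{: T * T}|.+2 | `[< packable D S m >]) m.

Definition lambdak (D : rel T) (k : nat) : nat :=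
  \big[minn/#|{: T * T}|.+2]_(S : {set T} | #|S| == k) lambdaS D S.

End Digraphs.

(* Main.v *)
Require Import Defs.
From mathcomp Require Import all_boot boolp.
From Stdlib Require Import Classical_Prop.
Set Implicit Arguments. Unset Strict Implicit. Unset Printing Implicit Defensive.

Lemma first_hit (T : finType) (e : rel T) (W : {set T}) a b :
  connect e a b -> b \in W ->
  exists2 t, t \in W & connect [rel u v | e u v && (u \notin W)] a t.
Proof.
move/connectP=> [p pth ->]; elim: p a pth => [|c p IH] a /=; first by exists a.
case/andP=> eac pth Hl; case: (boolP (a \in W)) => aW; first by exists a.
have [t tW ct] := IH c pth Hl; exists t => //.
by apply: connect_trans (connect1 _) ct; rewrite /= eac aW.
Qed.

Lemma cross (T : finType) (e : rel T) (W : {set T}) x y :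
  connect e x y -> x \in W -> y \notin W ->
  exists a b, [/\ e a b, a \in W & b \notin W].
Proof.
move/connectP=> [p pth ->]; elim: p x pth => [|c p IH] x /=; first by move=> _ ->.
case/andP=> exc pth xW Hl; case: (boolP (c \in W)) => cW.
  exact: IH pth cW Hl.
by exists x, c.
Qed.

Lemma zip_mem2 (T : eqType) (x : T) p a b :
  (a, b) \in zip (x :: p) p -> (a \in x :: p) && (b \in p).
Proof.
elim: p x => [|c p IH] x //=; case/predU1P.
  by case=> -> ->; rewrite !in_cons !eqxx.
by move/IH; case/andP=> H1 H2; apply/andP; split; rewrite in_cons ?H1 ?H2 orbT.
Qed.

Lemma path_zip (T : eqType) (e : rel T) x p a b :
  path e x p -> (a, b) \in zip (x :: p) p -> e a b.
Proof.
elim: p x => [|c p IH] x //=; case/andP=> exc pth; case/predU1P.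
  by case=> -> ->.
exact: IH.
Qed.

Lemma zip_path (T : eqType) (r : rel T) x p :
  (forall a b, (a, b) \in zip (x :: p) p -> r a b) -> path r x p.
Proof.
elim: p x => [|c p IH] x //= H; rewrite H ?in_cons ?eqxx //=.
by apply: IH => a b Hab; apply: H; rewrite /= in_cons Hab orbT.
Qed.

Lemma zip_uniq (T : eqType) (x : T) p a b :
  uniq (x :: p) -> (a, b) \in zip (x :: p) p -> (b, a) \in zip (x :: p) p -> False.
Proof.
elim: p x => [|c p IH] x //=.
case/andP=> xn uq.
case/predU1P=> [[Ea Eb]|H1].
  rewrite Ea Eb; case/predU1P=> [[E _]| /zip_mem2 /andP [_ H]].
    by move: xn; rewrite E in_cons eqxx.
  by move: xn; rewrite in_cons H orbT.
case/predU1P=> [[Eb Ea]|H2]; last exact: IH uq H1 H2.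
move: H1; rewrite Ea Eb => /zip_mem2 /andP [_ H].
by move: xn; rewrite in_cons H orbT.
Qed.

Lemma connect_last (T : finType) (r : rel T) x p y :
  path r x p -> y \in x :: p -> connect r y (last x p).
Proof.
elim: p x y => [|c p IH] x y /=.
  by rewrite in_cons orbF => _ /eqP ->.
case/andP=> rxc pth; case/predU1P=> [->|yin].
  apply: connect_trans (connect1 rxc) _; exact: (IH c c pth (mem_head _ _)).
exact: IH.
Qed.

Definition oinv (T : finType) (D : rel T) (W : {set T}) (A : rel T) : Prop :=
  [/\ (forall a b, A a b -> D a b),
      (forall a b, A a b -> (a \in W) && (b \in W)),
      (forall a b, A a b -> ~~ A b a),
      (forall x y, x \in W -> y \in W -> connect A x y) &
      W != set0].

Lemma grow (T : finType) (D : rel T) (W : {set T}) (A : rel T) :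
  symmetric_digraph D -> strong D ->
  (forall w u, w != u -> D w u -> underlying_connected (del2 D w u)) ->
  oinv D W A -> W != setT -> exists W' A', oinv D W' A' /\ #|W| < #|W'|.
Proof.
move=> sym str nb [AD AW Aas Acon W0] WT.
have [u0 u0W] : exists u0, u0 \notin W.
  case: (pickP [pred z | z \notin W]) => [z Hz|H]; first by exists z.
  case/negP: WT; apply/eqP/setP=> z; rewrite in_setT; exact: negbFE (H z).
have [w0 w0W] := set0Pn _ W0.
have [w [u [Dwu wW uW]]] := cross (str w0 u0) w0W u0W.
have wu : w != u by apply: contraNneq uW => <-.
have Uuw := nb w u wu Dwu u w.
have UD : forall a b, [rel a b | del2 D w u a b || del2 D w u b a] a b ->
    [/\ D a b, ~~ ((a == w) && (b == u)) & ~~ ((a == u) && (b == w))].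
  move=> a b /orP [] /andP []; rewrite negb_or => Dab /andP [h1 h2].
    by split.
  by split; [apply: sym | rewrite andbC | rewrite andbC].
have [t tW] := first_hit Uuw wW.
move/connectP=> [p0 pth0 Et].
move: tW; rewrite Et; case: (shortenP pth0) => p pth uq _ tW.
have Parc : forall a b, (a, b) \in zip (u :: p) p ->
    [/\ D a b, a \notin W, ~~ ((a == w) && (b == u)) & ~~ ((a == u) && (b == w))].
  by move=> a b /(path_zip pth) /= /andP [/UD [? ? ?] ?]; split.
pose W' := W :|: [set z | z \in u :: p].
pose A' := [rel a b | A a b || ((a == w) && (b == u)) || ((a, b) \in zip (u :: p) p)].
exists W', A'; split; last first.
  apply: proper_card; apply/properP; split.
    by apply/subsetP => z zW; rewrite inE zW.
  by exists u; rewrite // in_setU in_set mem_head orbT.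
have sub : forall a b, A a b -> A' a b by move=> a b h; rewrite /= h.
have csub : forall x y, connect A x y -> connect A' x y.
  by move=> x y; apply: connect_sub => a b h; apply: connect1; apply: sub.
have pth' : path A' u p.
  by apply: zip_path => a b h; rewrite /= h !orbT.
split.
- move=> a b /= /orP [/orP [/AD // | /andP [/eqP -> /eqP ->] //] | /Parc [] //].
- move=> a b /= /orP [/orP [/AW /andP [aW bW] | /andP [/eqP -> /eqP ->]] | /zip_mem2 /andP [ha hb]].
  + by rewrite !in_setU aW bW.
  + by rewrite /W' !in_setU !in_set wW mem_head orbT.
  + by rewrite /W' !in_setU !in_set ha in_cons hb !orbT.
- move=> a b H; apply/negP => H'.
  move: H H' => /= /orP [/orP [HA | /andP [/eqP Ea /eqP Eb]] | HZ]
                  /orP [/orP [HA' | /andP [/eqP Ea' /eqP Eb']] | HZ'].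
  + by move: (Aas _ _ HA); rewrite HA'.
  + by move: (AW _ _ HA) uW; rewrite Eb' => /andP [-> _].
  + by case: (Parc _ _ HZ') => _ bW _ _; move: (AW _ _ HA); rewrite (negbTE bW) andbF.
  + by move: (AW _ _ HA') uW; rewrite Eb => /andP [-> _].
  + by move: wu; rewrite -Ea' -Eb eqxx.
  + by case: (Parc _ _ HZ') => _ _ _; rewrite Ea Eb !eqxx.
  + by case: (Parc _ _ HZ) => _ aW _ _; move: (AW _ _ HA'); rewrite (negbTE aW) andbF.
  + by case: (Parc _ _ HZ) => _ _ _; rewrite Ea' Eb' !eqxx.
  + exact: zip_uniq uq HZ HZ'.
- have key : forall x, x \in W' -> connect A' x w && connect A' w x.
    move=> x; rewrite in_setU => /orP [xW | xp].
      by rewrite !csub ?Acon.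
    rewrite in_set in xp; apply/andP; split.
      apply: connect_trans (connect_last pth' xp) (csub _ _ (Acon _ _ tW wW)).
    have Awu : A' w u by rewrite /= !eqxx orbT.
    have h3 : connect A' w u by apply: connect1.
    exact: connect_trans h3 (path_connect pth' xp).
  move=> x y xW yW; case/andP: (key x xW) => h1 _; case/andP: (key y yW) => _ h2.
  exact: connect_trans h1 h2.
- by apply/set0Pn; exists w; rewrite in_setU wW.
Qed.

Lemma orient (T : finType) (D : rel T) (v : T) :
  symmetric_digraph D -> strong D ->
  (forall w u, w != u -> D w u -> underlying_connected (del2 D w u)) ->
  exists A : rel T, [/\ (forall a b, A a b -> D a b),
                        (forall a b, A a b -> ~~ A b a) &
                        (forall x y, connect A x y)].
Proof.
move=> sym str nb.
have H : forall n, exists W A, oinv D W A /\ (W = setT \/ n <= #|W|).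
  elim=> [|n [W [A [iv HW]]]].
    exists [set v], [rel a b | false]; split; last by right.
    split => //.
      by move=> x y; rewrite !inE => /eqP -> /eqP ->; exact: connect0.
    by apply/set0Pn; exists v; exact: set11.
  case: HW => [WT|nW]; first by exists W, A; split=> //; left.
  case: (eqVneq W setT) => [WT|WT]; first by exists W, A; split => //; left.
  have [W' [A' [iv' lt]]] := grow sym str nb iv WT.
  by exists W', A'; split => //; right; exact: leq_ltn_trans nW lt.
have [W [A [[AD _ Aas Acon _] HW]]] := H #|T|.+1.
have WT : W = setT.
  case: HW => // h.
  by have := leq_trans h (max_card (mem W)); rewrite ltnn.
by exists A; split => // x y; apply: Acon; rewrite WT in_setT.
Qed.

Lemma extend (T : finType) (A : {set T}) k :
  #|A| <= k <= #|T| -> exists S : {set T}, A \subset S /\ #|S| = k.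
Proof.
elim: k => [|k IH] /andP [hA hT].
  by exists A; split => //; apply/eqP; rewrite -leqn0.
case: (eqVneq #|A| k.+1) => [E|E]; first by exists A.
have hA' : #|A| <= k by rewrite -ltnS ltn_neqAle E hA.
have [S [AS cS]] := IH (introT andP (conj hA' (ltnW hT))).
have : 0 < #|~: S| by move: (cardsC S); rewrite cS => E'; rewrite -(ltn_add2l k) addn0 E'.
case/card_gt0P => z; rewrite inE => zS.
exists (z |: S); split; first exact: subset_trans AS (subsetUr _ _).
by rewrite cardsU1 zS cS.
Qed.

Lemma bridge_arc (T : finType) (D : rel T) (S : {set T}) x y H :
  symmetric_digraph D -> strong D ->
  ~ underlying_connected (del2 D x y) ->
  x \in S -> y \in S -> strong_subgraph_containing D S H -> (x, y) \in H.2.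
Proof.
move=> sym str nUC xS yS [Hsub SH Hcon].
case: (boolP ((x, y) \in H.2)) => // nxy; exfalso; apply: nUC.
pose U := [rel u v | del2 D x y u v || del2 D x y v u].
have Usym : connect_sym U.
  by apply: sym_connect_sym => a b; rewrite /U /= orbC.
have xH : x \in H.1 by apply: (subsetP SH).
have yH : y \in H.1 by apply: (subsetP SH).
have cxy : connect U x y.
  have [t] := first_hit (Hcon x y xH yH) (set11 y).
  rewrite inE => /eqP ->; apply: connect_sub => a b /= /andP [hab]; rewrite inE => ay.
  apply: connect1; rewrite /= /del2 /=; apply/orP; left.
  case: (Hsub _ hab) => /= -> _ _ /=.
  apply/negP => /orP [/andP [/eqP ea /eqP eb]| /andP [/eqP ea _]].
    by move: hab nxy; rewrite ea eb => ->.
  by move: ay; rewrite ea eqxx.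
have cz : forall z, connect U z x.
  move=> z.
  have [t tS c] := first_hit (str z x) (set21 x y).
  have cz' : connect U z t.
    apply: (connect_sub _ c) => a b /= /andP [Dab]; rewrite !inE negb_or => /andP [ax ay].
    apply: connect1; rewrite /= /del2 /= Dab /=; apply/orP; left.
    by rewrite (negbTE ax) (negbTE ay).
  move: tS; rewrite !inE => /orP [/eqP et| /eqP et]; rewrite et in cz' => //.
  by apply: connect_trans cz' _; rewrite Usym.
move=> a b; apply: connect_trans (cz a) _; rewrite Usym; exact: cz.
Qed.

Lemma bigmin_le (I : finType) (P : pred I) (F : I -> nat) x j :
  P j -> \big[minn/x]_(i | P i) F i <= F j.
Proof.
move=> Pj; have : j \in index_enum I by rewrite mem_index_enum.
elim: (index_enum I) => // a r IH; rewrite big_cons; case/predU1P => [<-|jr].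
  by rewrite Pj geq_minl.
case: (P a); last exact: IH jr.
exact: leq_trans (geq_minr _ _) (IH jr).
Qed.

Theorem theorem4p4 (T : finType) (D : rel T) (k : nat) :
  loopless D -> symmetric_digraph D -> strong D ->
  2 <= k <= #|T| ->
  (2 <= lambdak D k <-> ~ has_bridge D).
Proof.
move=> irr sym str /andP [k2 kT]; split.
- move=> lk [x [y [xy [Dxy [Dyx nUC]]]]].
  have [S [xyS cS]] : exists S : {set T}, [set x; y] \subset S /\ #|S| = k.
    by apply: extend; rewrite cards2 xy k2 kT.
  have xS : x \in S by apply: (subsetP xyS); rewrite !inE eqxx.
  have yS : y \in S by apply: (subsetP xyS); rewrite !inE eqxx orbT.
  have l1 : lambdaS D S <= 1.
    apply/bigmax_leqP => m /asboolP [F [Fs Fd]].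
    rewrite leqNgt; apply/negP => m2.
    have i0 : 0 < m by apply: leq_trans m2.
    have d := Fd (Ordinal i0) (Ordinal m2) isT.
    have h0 := bridge_arc sym str nUC xS yS (Fs (Ordinal i0)).
    have h1 := bridge_arc sym str nUC xS yS (Fs (Ordinal m2)).
    by move: (disjointFr d h0); rewrite h1.
  have : lambdak D k <= 1.
    apply: leq_trans _ l1; rewrite /lambdak.
    by apply: (@bigmin_le _ (fun S : {set T} => #|S| == k) (lambdaS D)); rewrite cS.
  by rewrite leqNgt lk.
- move=> nbr.
  have nb : forall w u, w != u -> D w u -> underlying_connected (del2 D w u).
    move=> w u wu Dwu; apply: NNPP => nUC; apply: nbr; exists w, u.
    by split => //; split => //; split => //; apply: sym.
  have : 0 < #|T| by apply: (leq_trans (leq_trans (isT : 0 < 2) k2) kT).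
  case/card_gt0P => v _.
  have [A [AD Aas Acon]] := orient v sym str nb.
  rewrite /lambdak; apply: (big_ind (fun m => 2 <= m)) => //.
    by move=> a b ha hb; rewrite leq_min ha hb.
  move=> S _.
  have i2 : 2 < #|{: T * T}|.+2 by rewrite ltnS ltnS; apply/card_gt0P; exists (v, v).
  apply: (@leq_bigmax_cond _ _ (fun m : 'I_ _ => nat_of_ord m) (Ordinal i2)).
  apply/asboolP.
  pose H1 : {set T} * {set T * T} := (setT, [set a | A a.1 a.2]).
  pose H2 : {set T} * {set T * T} := (setT, [set a | A a.2 a.1]).
  have s1 : strong_subgraph_containing D S H1.
    split; [|exact: subsetT|].
      by move=> a; rewrite /= inE => /AD Dab; rewrite !in_setT.
    move=> x y _ _; rewrite (@eq_connect _ _ A) //.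
    by move=> a b; rewrite /= inE.
  have s2 : strong_subgraph_containing D S H2.
    split; [|exact: subsetT|].
      by move=> a; rewrite /= inE => /AD /sym Dab; rewrite !in_setT.
    move=> x y _ _; rewrite (@eq_connect _ _ [rel a b | A b a]).
      by move: (connect_rev A x y) => /= ->; apply: Acon.
    by move=> a b; rewrite /= inE.
  have d12 : [disjoint H1.2 & H2.2].
    apply/pred0P => a /=; rewrite !inE; apply/negbTE/negP => /andP [h1 h2].
    by move: (Aas _ _ h1); rewrite h2.
  exists (fun i : 'I_2 => if val i == 0 then H1 else H2); split.
    by move=> [[|i] Hi] /=.
  move=> [[|[|i]] Hi] // [[|[|j]] Hj] //= _.
  by rewrite disjoint_sym.
Qed.
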